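(* Let $\mathcal M=(\mathcal H_A,\xi,\mathcal E,\mathsf Z)$ be a measurement scheme constrained by the third law that implements an extremal instrument $\mathcal I$ on $\mathcal H_S$. Then for every outcome $x$ and every $B\in\mathcal L(\mathcal H_S)$, $$\mathcal E^*(B\otimes\mathsf Z_x)=\mathcal I_x^*(B)\otimes\mathbb 1_A.$$
   Context: All Hilbert spaces are finite-dimensional and complex. A state is a positive operator of unit trace; it is full-rank if it is positive definite. A channel is a completely positive trace-preserving linear map, with dual $\Phi^*$ defined by $\mathrm{tr}[A\Phi(B)]=\mathrm{tr}[\Phi^*(A)B]$. A channel is constrained by the third law if it maps every full-rank state on its input space to a full-rank state on its output space. Let $2\le\dim\mathcal H_S<\infty$. An instrument with finite outcome set $\mathcal X$ is a family $\{\mathcal I_x\}_{x\in\mathcal X}$ of completely positive maps on $\mathcal L(\mathcal H_S)$ whose sum is trace-preserving. A measurement scheme $(\mathcal H_A,\xi,\mathcal E,\mathsf Z)$ consists of: - a finite-dimensional $\mathcal H_A$; - a state $\xi$ on $\mathcal H_A$; - a channel $\mathcal E$ on $\mathcal L(\mathcal H_S\otimes\mathcal H_A)$; - positive operators $\{\mathsf Z_x\}_{x\in\mathcal X}$ on $\mathcal H_A$ summing to $\mathbb 1$. It implements $\mathcal I_x(\rho)=\mathrm{tr}_A[(\mathbb 1\otimes\mathsf Z_x)\mathcal E(\rho\otimes\xi)]$. It is constrained by the third law if $\xi$ is full-rank and $\mathcal E$ is constrained by the third law. An instrument $\mathcal I$ is extremal if the following holds: whenever $\mathcal I_x=\lambda\mathcal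 I^{(1)}_x+(1-\lambda)\mathcal I^{(2)}_x$ for all $x$, with $\lambda\in(0,1)$ and $\mathcal I^{(1)},\mathcal I^{(2)}$ instruments with the same outcome set, then $\mathcal I^{(1)}=\mathcal I^{(2)}=\mathcal I$. *)

(* Defs.v *)
(* Complex numbers: C := R[i] for R : realType
   (mathcomp-real-closed's complex.v);  tensor products of matrices via
   mxtens.v (Kronecker product  A *t B, index (i,a) |-> i * dimA + a). *)
From HB Require Import structures.
From mathcomp Require Import all_boot all_order all_algebra.
From mathcomp Require Import reals.
From mathcomp.real_closed Require Export complex mxtens.
Set Implicit Arguments. Unset Strict Implicit. Unset Printing Implicit Defensive.
Import Order.TTheory GRing.Theory Num.Theory.
Local Open Scope ring_scope.

Section Quantum.
Variable C : numClosedFieldType.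

Definition adjmx m n (A : 'M[C]_(m, n)) : 'M[C]_(n, m) := map_mx Num.conj A^T.

Definition psd n (A : 'M[C]_n) : Prop :=
  forall v : 'cV[C]_n, 0 <= (adjmx v *m A *m v) 0 0.

Definition pd n (A : 'M[C]_n) : Prop :=
  forall v : 'cV[C]_n, v != 0 -> 0 < (adjmx v *m A *m v) 0 0.

Definition is_state n (A : 'M[C]_n) : Prop := psd A /\ \tr A = 1.
Definition is_fullrank_state n (A : 'M[C]_n) : Prop := pd A /\ \tr A = 1.

(* ampliation id_k (x) f : L(C^k (x) C^n) -> L(C^k (x) C^m) *)
Definition ampl k n m (f : 'M[C]_n -> 'M[C]_m) (X : 'M[C]_(k * n)) : 'M[C]_(k * m) :=
  \matrix_(I, J)
    f (\matrix_(a, b) X (mxtens_index ((mxtens_unindex I).1, a))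
                          (mxtens_index ((mxtens_unindex J).1, b)))
      (mxtens_unindex I).2 (mxtens_unindex J).2.

Definition positive_map n m (f : 'M[C]_n -> 'M[C]_m) : Prop :=
  forall X, psd X -> psd (f X).

Definition completely_positive n m (f : 'M[C]_n -> 'M[C]_m) : Prop :=
  forall k : nat, positive_map (@ampl k n m f).

Definition trace_preserving n m (f : 'M[C]_n -> 'M[C]_m) : Prop :=
  forall X, \tr (f X) = \tr X.

Definition is_channel n m (f : {linear 'M[C]_n -> 'M[C]_m}) : Prop :=
  completely_positive f /\ trace_preserving f.

Definition third_law n m (f : 'M[C]_n -> 'M[C]_m) : Prop :=
  forall rho, is_fullrank_state rho -> is_fullrank_state (f rho).

(* the dual map, characterised by tr[A f(B)] = tr[f^*(A) B] *)
Definition dual n m (f : 'M[C]_n -> 'M[C]_m) (A : 'M[C]_m) : 'M[C]_n :=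
  \matrix_(i, j) \tr (A *m f (delta_mx j i)).

Definition ptrace2 n p (M : 'M[C]_(n * p)) : 'M[C]_n :=
  \matrix_(i, j) \sum_(a < p) M (mxtens_index (i, a)) (mxtens_index (j, a)).

Definition is_instrument n (X : finType) (I : X -> {linear 'M[C]_n -> 'M[C]_n}) : Prop :=
  (forall x, completely_positive (I x)) /\
  trace_preserving (fun rho => \sum_(x : X) I x rho).

Definition is_extremal_instrument n (X : finType)
    (I : X -> {linear 'M[C]_n -> 'M[C]_n}) : Prop :=
  is_instrument I /\
  forall (lam : C) (I1 I2 : X -> {linear 'M[C]_n -> 'M[C]_n}),
    0 < lam < 1 -> is_instrument I1 -> is_instrument I2 ->
    (forall x rho, I x rho = lam *: I1 x rho + (1 - lam) *: I2 x rho) ->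
    (forall x rho, I1 x rho = I x rho) /\ (forall x rho, I2 x rho = I x rho).

Definition is_povm p (X : finType) (Z : X -> 'M[C]_p) : Prop :=
  (forall x, psd (Z x)) /\ \sum_(x : X) Z x = 1%:M.

Definition is_measurement_scheme n p (X : finType) (xi : 'M[C]_p)
    (E : {linear 'M[C]_(n * p) -> 'M[C]_(n * p)}) (Z : X -> 'M[C]_p) : Prop :=
  is_state xi /\ is_channel E /\ is_povm Z.

Definition implements n p (X : finType) (xi : 'M[C]_p)
    (E : {linear 'M[C]_(n * p) -> 'M[C]_(n * p)}) (Z : X -> 'M[C]_p)
    (I : X -> {linear 'M[C]_n -> 'M[C]_n}) : Prop :=
  forall x rho, I x rho = ptrace2 ((1%:M *t Z x) *m E (rho *t xi)).

Definition scheme_third_law n p (xi : 'M[C]_p)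
    (E : {linear 'M[C]_(n * p) -> 'M[C]_(n * p)}) : Prop :=
  is_fullrank_state xi /\ third_law E.

End Quantum.

(* Main.v *)
Require Import Defs.
From HB Require Import structures.
From mathcomp Require Import all_boot all_order all_algebra.
From mathcomp Require Import reals.
From mathcomp.real_closed Require Import complex mxtens.
Set Implicit Arguments. Unset Strict Implicit. Unset Printing Implicit Defensive.
Import Order.TTheory GRing.Theory Num.Theory.
Local Open Scope ring_scope.

Section Aux.
Variable C : numClosedFieldType.

Lemma sum_tens m n (F : 'I_(m * n) -> C) :
  \sum_(k < m * n) F k = \sum_(i < m) \sum_(j < n) F (mxtens_index (i, j)).
Proof.
rewrite pair_big /=.
rewrite (reindex (fun p : 'I_m * 'I_n => mxtens_index p)) //=.
  by apply: eq_bigr => -[]. 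
by exists (@mxtens_unindex m n) => k _; rewrite (mxtens_indexK, mxtens_unindexK).
Qed.

Lemma mxtens_index_eq m n (i k : 'I_m) (j l : 'I_n) :
  (mxtens_index (i, j) == mxtens_index (k, l)) = (i == k) && (j == l).
Proof.
by rewrite (inj_eq (can_inj (@mxtens_indexK m n))) xpair_eqE.
Qed.

Lemma adjmxE m n (A : 'M[C]_(m, n)) i j : adjmx A i j = (A j i)^*.
Proof. by rewrite !mxE. Qed.

Lemma adjmxK m n (A : 'M[C]_(m, n)) : adjmx (adjmx A) = A.
Proof. by apply/matrixP => i j; rewrite !adjmxE conjCK. Qed.

Lemma adjmxM m n p (A : 'M[C]_(m, n)) (B : 'M[C]_(n, p)) :
  adjmx (A *m B) = adjmx B *m adjmx A.
Proof.
apply/matrixP => i j; rewrite !mxE rmorph_sum; apply: eq_bigr => k _.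
by rewrite !mxE rmorphM mulrC.
Qed.

Lemma adjmxD m n (A B : 'M[C]_(m, n)) : adjmx (A + B) = adjmx A + adjmx B.
Proof. by apply/matrixP => i j; rewrite !mxE rmorphD. Qed.

Lemma adjmxZ m n a (A : 'M[C]_(m, n)) : adjmx (a *: A) = a^* *: adjmx A.
Proof. by apply/matrixP => i j; rewrite !mxE rmorphM. Qed.

Lemma adjmx_sum m n (I : finType) (F : I -> 'M[C]_(m, n)) :
  adjmx (\sum_i F i) = \sum_i adjmx (F i).
Proof.
by apply/matrixP => i j; rewrite !mxE !summxE rmorph_sum; apply: eq_bigr => k _; rewrite !mxE.
Qed.

Lemma adjmx1 n : adjmx (1%:M : 'M[C]_n) = 1%:M.
Proof. by apply/matrixP => i j; rewrite !mxE eq_sym; case: eqP => _; rewrite ?conjC0 ?conjC1. Qed.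

Definition qf n (v : 'cV[C]_n) (A : 'M[C]_n) := (adjmx v *m A *m v) 0 0.

Lemma qfD n v (A B : 'M[C]_n) : qf v (A + B) = qf v A + qf v B.
Proof. by rewrite /qf mulmxDr mulmxDl mxE. Qed.

Lemma qfZ n v a (A : 'M[C]_n) : qf v (a *: A) = a * qf v A.
Proof. by rewrite /qf -scalemxAr -scalemxAl mxE. Qed.

Lemma qf_sum n v (I : finType) (F : I -> 'M[C]_n) :
  qf v (\sum_i F i) = \sum_i qf v (F i).
Proof.
by rewrite /qf mulmx_sumr mulmx_suml summxE.
Qed.

Lemma psd_add n (A B : 'M[C]_n) : psd A -> psd B -> psd (A + B).
Proof. by move=> hA hB v; have := qfD v A B; rewrite /qf => ->; exact: addr_ge0. Qed.

Lemma psd_scale n a (A : 'M[C]_n) : 0 <= a -> psd A -> psd (a *: A).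
Proof. by move=> ha hA v; have := qfZ v a A; rewrite /qf => ->; exact: mulr_ge0. Qed.

Lemma psd_sum n (I : finType) (c : I -> C) (F : I -> 'M[C]_n) :
  (forall i, 0 <= c i) -> (forall i, psd (F i)) -> psd (\sum_i c i *: F i).
Proof.
move=> hc hF v; have := qf_sum v (fun i => c i *: F i); rewrite /qf => ->.
by apply: sumr_ge0 => i _; have := qfZ v (c i) (F i); rewrite /qf => ->; rewrite mulr_ge0 // hF.
Qed.

Lemma psd_congr m n (K : 'M[C]_(m, n)) (X : 'M[C]_n) :
  psd X -> psd (K *m X *m adjmx K).
Proof.
move=> hX v; have := hX (adjmx K *m v).
by rewrite adjmxM adjmxK !mulmxA.
Qed.

Lemma psd1 : psd (1%:M : 'M[C]_1).
Proof.
move=> v; rewrite mulmx1 mxE big_ord1 !mxE mulrC; exact: mul_conjC_ge0.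
Qed.

Lemma psd_rank1 n (y : 'cV[C]_n) : psd (y *m adjmx y).
Proof. by have := psd_congr y psd1; rewrite mulmx1. Qed.

End Aux.

From HB Require Import structures.
From mathcomp Require Import all_boot all_order all_algebra.
From mathcomp Require Import reals.
From mathcomp.real_closed Require Import complex mxtens.
From mathcomp Require Import ring.
Set Implicit Arguments. Unset Strict Implicit. Unset Printing Implicit Defensive.
Import Order.TTheory GRing.Theory Num.Theory.
Local Open Scope ring_scope.

Section Aux2.
Variable C : numClosedFieldType.

Lemma qf_adj n (v : 'cV[C]_n) A : (qf v A)^* = qf v (adjmx A).
Proof.
rewrite /qf -adjmxE adjmxM adjmxM adjmxK mulmxA; by [].
Qed.

Lemma qf_bil n (u w : 'cV[C]_n) (H : 'M[C]_n) :
  qf (u + w) H = qf u H + qf w H + ((adjmx u *m H *m w) 0 0 + (adjmx w *m H *m u) 0 0).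
Proof.
rewrite /qf adjmxD !mulmxDl !mulmxDr !mxE.
ring.
Qed.

Lemma psd_herm n (A : 'M[C]_n) : psd A -> adjmx A = A.
Proof.
move=> hA; set H := A - adjmx A.
have q0 : forall v, qf v H = 0.
  move=> v; rewrite /H /qf mulmxBr mulmxBl mxE -/(qf v A) -/(qf v (adjmx A)).
  by rewrite [X in _ + X]mxE -/(qf v (adjmx A)) -qf_adj conj_Creal ?subrr // ger0_real // hA.
have b0 : forall u w : 'cV[C]_n, (adjmx u *m H *m w) 0 0 = 0.
  move=> u w; have h1 := qf_bil u w H; rewrite !q0 !add0r in h1.
  have h2 := qf_bil ('i *: u) w H; rewrite !q0 !add0r in h2.
  have e1 : ('i^* *: adjmx u *m H *m w) 0 0 = 'i^* * (adjmx u *m H *m w) 0 0.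
    by rewrite -[('i^* *: adjmx u) *m H]scalemxAl -scalemxAl mxE.
  have e2 : (adjmx w *m H *m ('i *: u)) 0 0 = 'i * (adjmx w *m H *m u) 0 0.
    by rewrite -scalemxAr mxE.
  move: h2; rewrite adjmxZ e1 e2 conjCi.
  move: h1 => /eqP; rewrite eq_sym addr_eq0 => /eqP ->.
  rewrite mulrNN -mulr2n => /esym/eqP; rewrite mulrn_eq0 /= mulf_eq0 (negbTE (neq0Ci _)) /=.
  by move=> /eqP ->; rewrite oppr0.
have H0 : H = 0.
  apply/matrixP => i j; have := b0 (delta_mx i 0) (delta_mx j 0).
  have -> : adjmx (delta_mx i 0 : 'cV[C]_n) = delta_mx 0 i.
    by apply/matrixP => a b; rewrite !mxE; case: eqP; case: eqP; rewrite ?conjC0 ?conjC1.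
  by rewrite -rowE -colE !mxE => ->.
by apply/eqP; rewrite eq_sym -subr_eq0 -/H H0.
Qed.

End Aux2.

Section Spec.
Variable C : numClosedFieldType.

Lemma normal_of_psd n (A : 'M[C]_n) : psd A -> A \is normalmx.
Proof.
move=> hA; rewrite qualifE; apply/eqP.
have h : adjmx A = A := psd_herm hA.
change (A *m adjmx A = adjmx A *m A); by rewrite h.
Qed.

Lemma unitary_adj n (P : 'M[C]_n) : P \is unitarymx -> P *m adjmx P = 1%:M.
Proof. by move/unitarymxP. Qed.

Lemma adjmx_col m n (Q : 'M[C]_(m, n)) f : adjmx (col f Q) = row f (adjmx Q).
Proof. by apply/matrixP => i j; rewrite !mxE. Qed.

Lemma colQ m n (Q : 'M[C]_(m, n)) f g :
  (adjmx (col f Q) *m col g Q) 0 0 = (adjmx Q *m Q) f g.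
Proof. by rewrite adjmx_col !mxE; apply: eq_bigr => k _; rewrite !mxE. Qed.

Lemma mx11_mul (a b : 'M[C]_1) : (a *m b) 0 0 = a 0 0 * b 0 0.
Proof. by rewrite mxE big_ord1. Qed.

Lemma qf_rank1 n (v y : 'cV[C]_n) :
  qf v (y *m adjmx y) = (adjmx v *m y) 0 0 * (adjmx y *m v) 0 0.
Proof. by rewrite /qf mulmxA -mulmxA mx11_mul. Qed.

Lemma spectral_sum n (Q : 'M[C]_n) (d : 'rV[C]_n) :
  Q *m diag_mx d *m adjmx Q = \sum_f d 0 f *: (col f Q *m adjmx (col f Q)).
Proof.
apply/matrixP => i j; rewrite mul_mx_diag summxE !mxE; apply: eq_bigr => k _.
by rewrite !mxE big_ord1 !mxE mulrA [d 0 k * _]mulrC.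
Qed.

Lemma psd_spectral n (A : 'M[C]_n) : psd A -> exists (Q : 'M[C]_n) (d : 'I_n -> C),
  [/\ adjmx Q *m Q = 1%:M, Q *m adjmx Q = 1%:M, (forall f, 0 <= d f) &
   A = \sum_f d f *: (col f Q *m adjmx (col f Q))].
Proof.
move=> hA; have /orthomx_spectralP hsp := normal_of_psd hA.
set P := spectralmx A in hsp; set D := spectral_diag A in hsp.
have Pu : P \is unitarymx := spectral_unitarymx A.
have PQ : P *m adjmx P = 1%:M by move/unitarymxP: Pu.
have QP : adjmx P *m P = 1%:M.
  by have := mulVmx (unitarymx_unit Pu); rewrite invmx_unitary.
have Aeq : A = \sum_f D 0 f *: (col f (adjmx P) *m adjmx (col f (adjmx P))).
  by rewrite -spectral_sum adjmxK {1}hsp invmx_unitary.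
exists (adjmx P), (fun f => D 0 f); split => //; rewrite ?adjmxK //.
move=> f; have := hA (col f (adjmx P)); rewrite -/(qf _ _) Aeq qf_sum.
rewrite (bigD1 f) //= big1 ?addr0; last first.
  move=> g ngf; rewrite qfZ qf_rank1 !colQ adjmxK PQ !mxE.
  by rewrite eq_sym (negbTE ngf) mul0r mulr0.
by rewrite qfZ qf_rank1 !colQ adjmxK PQ !mxE eqxx !mulr1.
Qed.

Lemma qf_decomp n (Q : 'M[C]_n) (d : 'I_n -> C) f :
  adjmx Q *m Q = 1%:M ->
  qf (col f Q) (\sum_g d g *: (col g Q *m adjmx (col g Q))) = d f.
Proof.
move=> QQ; rewrite qf_sum (bigD1 f) //= big1 ?addr0; last first.
  move=> g ngf; rewrite qfZ qf_rank1 !colQ QQ !mxE.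
  by rewrite eq_sym (negbTE ngf) mul0r mulr0.
by rewrite qfZ qf_rank1 !colQ QQ !mxE eqxx !mulr1.
Qed.

Lemma col_neq0 n (Q : 'M[C]_n) f : adjmx Q *m Q = 1%:M -> col f Q != 0.
Proof.
move=> QQ; apply/eqP => h; have := colQ Q f f; rewrite QQ h mulmx0 !mxE eqxx /=.
by move/eqP; rewrite eq_sym oner_eq0.
Qed.

Lemma pd_psd n (A : 'M[C]_n) : pd A -> psd A.
Proof.
move=> hA v; case: (eqVneq v 0) => [->|nv]; last exact: ltW (hA v nv).
by rewrite mulmx0 mxE.
Qed.

Lemma pd_spectral n (A : 'M[C]_n) : pd A -> exists (Q : 'M[C]_n) (d : 'I_n -> C),
  [/\ adjmx Q *m Q = 1%:M, Q *m adjmx Q = 1%:M, (forall f, 0 < d f) &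
   A = \sum_f d f *: (col f Q *m adjmx (col f Q))].
Proof.
move=> hA; have [Q [d [QQ QQ' _ Aeq]]] := psd_spectral (pd_psd hA).
exists Q, d; split => // f; have := hA _ (col_neq0 f QQ).
by rewrite -/(qf _ _) Aeq qf_decomp.
Qed.

End Spec.

From HB Require Import structures.
From mathcomp Require Import all_boot all_order all_algebra.
From mathcomp Require Import reals.
From mathcomp.real_closed Require Import complex mxtens.
From mathcomp Require Import ring.
Set Implicit Arguments. Unset Strict Implicit. Unset Printing Implicit Defensive.
Import Order.TTheory GRing.Theory Num.Theory.
Local Open Scope ring_scope.

Section Ampl.
Variable C : numClosedFieldType.

Lemma ampl_ext k n m (f g : 'M[C]_n -> 'M[C]_m) :
  (forall X, f X = g X) -> forall X, @ampl C k _ _ f X = @ampl C k _ _ g X.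
Proof. by move=> h X; apply/matrixP => i j; rewrite !mxE h. Qed.

Lemma cp_ext n m (f g : 'M[C]_n -> 'M[C]_m) :
  (forall X, f X = g X) -> completely_positive f -> completely_positive g.
Proof. by move=> h hf k X hX; rewrite -(ampl_ext (k:=k) h); apply: hf. Qed.

Lemma ampl_comp k n m l (f : 'M[C]_m -> 'M[C]_l) (g : 'M[C]_n -> 'M[C]_m) X :
  @ampl C k _ _ (fun Y => f (g Y)) X = @ampl C k _ _ f (@ampl C k _ _ g X).
Proof.
apply/matrixP => I J; rewrite !mxE; congr (f _ _ _).
by apply/matrixP => a b; rewrite !mxE !mxtens_indexK.
Qed.

Lemma cp_comp n m l (f : 'M[C]_m -> 'M[C]_l) (g : 'M[C]_n -> 'M[C]_m) :
  completely_positive f -> completely_positive g ->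
  completely_positive (fun Y => f (g Y)).
Proof. by move=> hf hg k X hX; rewrite ampl_comp; apply: hf; apply: hg. Qed.

Lemma cp_sum n m (T : finType) (c : T -> C) (f : T -> 'M[C]_n -> 'M[C]_m) :
  (forall i, 0 <= c i) -> (forall i, completely_positive (f i)) ->
  completely_positive (fun Y => \sum_i c i *: f i Y).
Proof.
move=> hc hf k X hX.
have -> : @ampl C k _ _ (fun Y => \sum_i c i *: f i Y) X = \sum_i c i *: @ampl C k _ _ (f i) X.
  by apply/matrixP => I J; rewrite !mxE !summxE; apply: eq_bigr => i _; rewrite !mxE.
by apply: psd_sum => // i; apply: hf.
Qed.

Lemma sum_kron k (a : 'I_k) (F : 'I_k -> C) :
  \sum_g (1%:M : 'M[C]_k) a g * F g = F a.
Proof.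
rewrite (bigD1 a) //= big1 ?addr0 ?mxE ?eqxx ?mul1r // => g ng.
by rewrite mxE eq_sym (negbTE ng) mul0r.
Qed.

Lemma conj1mx k (a b : 'I_k) : ((1%:M : 'M[C]_k) a b)^* = (1%:M : 'M[C]_k) a b.
Proof. by rewrite mxE rmorph_nat. Qed.

Lemma cp_kraus m n (K : 'M[C]_(m, n)) :
  completely_positive (fun Y => K *m Y *m adjmx K).
Proof.
move=> k X hX.
have -> : @ampl C k _ _ (fun Y => K *m Y *m adjmx K) X =
   ((1%:M : 'M[C]_k) *t K) *m X *m adjmx ((1%:M : 'M[C]_k) *t K).
  apply/matrixP => I J.
  case: (mxtens_indexP I) => al i; case: (mxtens_indexP J) => be j.
  rewrite !mxE !mxtens_indexK /= sum_tens.
  transitivity (\sum_(g < k) (1%:M : 'M[C]_k) be g *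
     \sum_(b < n) ((1%:M : 'M[C]_k) *t K *m X) (mxtens_index (al, i)) (mxtens_index (g, b)) * (K j b)^*); last first.
    apply: eq_bigr => g _; rewrite mulr_sumr; apply: eq_bigr => b _.
    by rewrite adjmxE tensmxE rmorphM /= conj1mx mulrCA.
  rewrite sum_kron; apply: eq_bigr => b _; rewrite adjmxE; congr (_ * _).
  rewrite !mxE sum_tens.
  transitivity (\sum_(g < k) (1%:M : 'M[C]_k) al g * \sum_(a < n) K i a * X (mxtens_index (g, a)) (mxtens_index (be, b))).
    by rewrite sum_kron; apply: eq_bigr => a _; rewrite !mxE.
  apply: eq_bigr => g _; rewrite mulr_sumr; apply: eq_bigr => a _.
  by rewrite tensmxE mulrA.
exact: psd_congr.
Qed.

End Ampl.

From HB Require Import structures.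
From mathcomp Require Import all_boot all_order all_algebra.
From mathcomp Require Import reals.
From mathcomp.real_closed Require Import complex mxtens.
From mathcomp Require Import ring.
Set Implicit Arguments. Unset Strict Implicit. Unset Printing Implicit Defensive.
Import Order.TTheory GRing.Theory Num.Theory.
Local Open Scope ring_scope.

Section Lin.
Variable C : numClosedFieldType.

Lemma ptrace2_lin n p a (M N : 'M[C]_(n * p)) :
  ptrace2 (a *: M + N) = a *: ptrace2 M + ptrace2 N.
Proof.
apply/matrixP => i j; rewrite !mxE mulr_sumr -big_split /=.
by apply: eq_bigr => k _; rewrite !mxE.
Qed.

Lemma tens_linl m n p q a (A A' : 'M[C]_(m, n)) (B : 'M[C]_(p, q)) :
  (a *: A + A') *t B = a *: (A *t B) + A' *t B.
Proof. by apply/matrixP => i j; rewrite !mxE mulrDl mulrA. Qed.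

Lemma tens_linr m n p q a (A : 'M[C]_(m, n)) (B B' : 'M[C]_(p, q)) :
  A *t (a *: B + B') = a *: (A *t B) + A *t B'.
Proof. by apply/matrixP => i j; rewrite !mxE mulrDr mulrCA. Qed.

Lemma ptrace2_sum n p (T : finType) (c : T -> C) (N : T -> 'M[C]_(n * p)) :
  ptrace2 (\sum_t c t *: N t) = \sum_t c t *: ptrace2 (N t).
Proof.
apply/matrixP => i j; rewrite !mxE summxE.
under eq_bigr do rewrite summxE.
rewrite exchange_big /=; apply: eq_bigr => t _; rewrite !mxE mulr_sumr.
by apply: eq_bigr => a _; rewrite mxE.
Qed.

Lemma tens_sumr m n p q (T : finType) (c : T -> C) (A : 'M[C]_(m, n)) (B : T -> 'M[C]_(p, q)) :
  A *t (\sum_t c t *: B t) = \sum_t c t *: (A *t B t).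
Proof.
apply/matrixP => i j; rewrite mxE !summxE mulr_sumr.
by apply: eq_bigr => t _; rewrite !mxE mulrCA.
Qed.

Lemma ptrace2_sum1 n p (T : finType) (N : T -> 'M[C]_(n * p)) :
  ptrace2 (\sum_t N t) = \sum_t ptrace2 (N t).
Proof.
have := ptrace2_sum (fun _ => 1) N.
by rewrite (eq_bigr _ (fun t _ => scale1r (N t))) (eq_bigr _ (fun t _ => scale1r (ptrace2 (N t)))).
Qed.

Lemma tr_ptrace2 n p (M : 'M[C]_(n * p)) : \tr (ptrace2 M) = \tr M.
Proof.
rewrite /mxtrace sum_tens; apply: eq_bigr => i _; rewrite mxE; by [].
Qed.

Lemma tr_tens n p (A : 'M[C]_n) (B : 'M[C]_p) : \tr (A *t B) = \tr A * \tr B.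
Proof. by rewrite /mxtrace mulr_sum; apply: eq_bigr => i _; rewrite mxE. Qed.

Lemma tens11 n p : (1%:M : 'M[C]_n) *t (1%:M : 'M[C]_p) = 1%:M.
Proof.
apply/matrixP => I J.
case: (mxtens_indexP I) => i a; case: (mxtens_indexP J) => j b.
rewrite tensmxE !mxE mxtens_index_eq.
by case: (i == j); case: (a == b); rewrite ?mulr1 ?mulr0 ?mul0r.
Qed.

End Lin.

Section Kr.
Variable C : numClosedFieldType.

Definition Kop n p (u : 'cV[C]_p) : 'M[C]_(n * p, n) :=
  \matrix_(I, j) ((1%:M : 'M[C]_n) (mxtens_unindex I).1 j * u (mxtens_unindex I).2 0).
Definition Lop n p (y : 'cV[C]_p) : 'M[C]_(n, n * p) :=
  \matrix_(i, J) ((1%:M : 'M[C]_n) i (mxtens_unindex J).1 * (y (mxtens_unindex J).2 0)^*).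

Lemma sum_kron' k (a : 'I_k) (F : 'I_k -> C) :
  \sum_g (1%:M : 'M[C]_k) g a * F g = F a.
Proof.
rewrite (bigD1 a) //= big1 ?addr0 ?mxE ?eqxx ?mul1r // => g ng.
by rewrite mxE (negbTE ng) mul0r.
Qed.

Lemma sumk1 k (a : 'I_k) (F : 'I_k -> C) : \sum_g (a == g)%:R * F g = F a.
Proof.
rewrite (bigD1 a) //= big1 ?addr0 ?eqxx ?mul1r // => g ng.
by rewrite eq_sym (negbTE ng) mul0r.
Qed.

Lemma sumk2 k (a : 'I_k) (F : 'I_k -> C) : \sum_g (g == a)%:R * F g = F a.
Proof. by rewrite -(sumk1 a); apply: eq_bigr => g _; rewrite eq_sym. Qed.

Lemma Kop_tens n p (u : 'cV[C]_p) (r : 'M[C]_n) :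
  r *t (u *m adjmx u) = Kop n u *m r *m adjmx (Kop n u).
Proof.
apply/matrixP => I J.
case: (mxtens_indexP I) => i a; case: (mxtens_indexP J) => j b.
rewrite tensmxE !mxE big_ord1 !mxE.
transitivity (\sum_l (j == l)%:R * ((\sum_k (i == k)%:R * (u a 0 * r k l)) * (u b 0)^*)); last first.
  apply: eq_bigr => l _; rewrite !mxE !mxtens_indexK /= rmorphM /= rmorph_nat.
  rewrite [RHS]mulrCA; congr (_ * (_ * _)); apply: eq_bigr => k _.
  by rewrite /Kop !mxE !mxtens_indexK /= mulrA.
rewrite sumk1 sumk1; ring.
Qed.

Lemma Lop_E n p (y : 'cV[C]_p) i k c :
  Lop n y i (mxtens_index (k, c)) = (i == k)%:R * (y c 0)^*.
Proof. by rewrite /Lop mxE mxtens_indexK /= mxE. Qed.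

Lemma LopM_E n p (y : 'cV[C]_p) (M : 'M[C]_(n * p)) i l a :
  (Lop n y *m M) i (mxtens_index (l, a)) =
  \sum_c (y c 0)^* * M (mxtens_index (i, c)) (mxtens_index (l, a)).
Proof.
rewrite mxE sum_tens.
transitivity (\sum_k (i == k)%:R * \sum_c (y c 0)^* * M (mxtens_index (k, c)) (mxtens_index (l, a))).
  apply: eq_bigr => k _; rewrite mulr_sumr; apply: eq_bigr => c _.
  by rewrite Lop_E mulrA.
by rewrite sumk1.
Qed.

Lemma Lop_ptrace n p (y : 'cV[C]_p) (M : 'M[C]_(n * p)) :
  ptrace2 ((1%:M *t (y *m adjmx y)) *m M) = Lop n y *m M *m adjmx (Lop n y).
Proof.
apply/matrixP => i j.
transitivity (\sum_a \sum_c y a 0 * (y c 0)^* * M (mxtens_index (i, c)) (mxtens_index (j, a))).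
  rewrite mxE; apply: eq_bigr => a _; rewrite mxE sum_tens.
  transitivity (\sum_k (i == k)%:R * \sum_c (y a 0 * (y c 0)^* * M (mxtens_index (k, c)) (mxtens_index (j, a)))); last by rewrite sumk1.
  apply: eq_bigr => k _; rewrite mulr_sumr; apply: eq_bigr => c _.
  by rewrite tensmxE [1%:M i k]mxE [(y *m _) a c]mxE big_ord1 [adjmx y _ _]mxE [y^T _ _]mxE !mulrA.
rewrite mxE sum_tens.
transitivity (\sum_l (j == l)%:R * \sum_a ((Lop n y *m M) i (mxtens_index (l, a)) * y a 0)); last first.
  apply: eq_bigr => l _; rewrite mulr_sumr; apply: eq_bigr => a _.
  rewrite [adjmx _ _ _]mxE [(Lop n y)^T _ _]mxE Lop_E rmorphM /= rmorph_nat conjCK; ring.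
rewrite sumk1; apply: eq_bigr => a _; rewrite LopM_E mulr_suml; apply: eq_bigr => c _; ring.
Qed.

End Kr.

Section Meas.
Variables (C : numClosedFieldType) (n p : nat) (X : finType).
Variable E : {linear 'M[C]_(n * p) -> 'M[C]_(n * p)}.
Variable Z : X -> 'M[C]_p.

Definition Fm (x : X) (s : 'M[C]_p) (r : 'M[C]_n) : 'M[C]_n :=
  ptrace2 ((1%:M *t Z x) *m E (r *t s)).
Definition Fs x r s := Fm x s r.

Lemma Fm_linear x s : linear (Fm x s).
Proof.
move=> a r r'; rewrite /Fm tens_linl linearP mulmxDr -scalemxAr.
exact: ptrace2_lin.
Qed.

Lemma Fs_linear x r : linear (Fs x r).
Proof.
move=> a s s'; rewrite /Fs /Fm tens_linr linearP mulmxDr -scalemxAr.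
exact: ptrace2_lin.
Qed.

HB.instance Definition _ x s := GRing.isLinear.Build C 'M[C]_n 'M[C]_n _ (Fm x s) (Fm_linear x s).
HB.instance Definition _ x r := GRing.isLinear.Build C 'M[C]_p 'M[C]_n _ (Fs x r) (Fs_linear x r).

Lemma Fs_sum x r (T : finType) (c : T -> C) (s : T -> 'M[C]_p) :
  Fm x (\sum_i c i *: s i) r = \sum_i c i *: Fm x (s i) r.
Proof.
change (Fs x r (\sum_i c i *: s i) = \sum_i c i *: Fs x r (s i)).
by rewrite linear_sum; apply: eq_bigr => i _; rewrite linearZ.
Qed.

Lemma Fm_decomp x r (T1 T2 : finType) (a : T1 -> C) (u : T1 -> 'cV[C]_p)
   (b : T2 -> C) (y : T2 -> 'cV[C]_p) :
  Z x = \sum_d b d *: (y d *m adjmx (y d)) ->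
  Fm x (\sum_s a s *: (u s *m adjmx (u s))) r =
  \sum_s a s *: \sum_d b d *: (Lop n (y d) *m E (Kop n (u s) *m r *m adjmx (Kop n (u s))) *m adjmx (Lop n (y d))).
Proof.
move=> hZ; rewrite Fs_sum; apply: eq_bigr => s _; congr (_ *: _).
rewrite /Fm hZ tens_sumr mulmx_suml.
rewrite (eq_bigr (fun d => b d *: ((1%:M *t (y d *m adjmx (y d))) *m E (r *t (u s *m adjmx (u s)))))); last first.
  by move=> d _; rewrite -scalemxAl.
rewrite ptrace2_sum; apply: eq_bigr => d _; congr (_ *: _).
by rewrite Lop_ptrace Kop_tens.
Qed.

Lemma Fm_cp x s : completely_positive E -> psd s -> psd (Z x) ->
  completely_positive (Fm x s).
Proof.
move=> hE hs hZ.
have [Q [a [_ _ ha seq]]] := psd_spectral hs.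
have [Q' [b [_ _ hb zeq]]] := psd_spectral hZ.
apply: (@cp_ext _ _ _ (fun r => \sum_f a f *: \sum_g b g *: (Lop n (col g Q') *m E (Kop n (col f Q) *m r *m adjmx (Kop n (col f Q))) *m adjmx (Lop n (col g Q'))))).
  by move=> r; rewrite seq (Fm_decomp r a (fun f => col f Q) zeq).
apply: cp_sum => // f; apply: cp_sum => // g.
apply: (cp_comp (cp_kraus (Lop n (col g Q')))).
apply: (cp_comp hE (cp_kraus (Kop n (col f Q)))).
Qed.

Lemma sum_Fm s r : \sum_x Z x = 1%:M -> \sum_x Fm x s r = ptrace2 (E (r *t s)).
Proof.
move=> hZ; rewrite /Fm -ptrace2_sum1 -mulmx_suml.
have -> : \sum_x (1%:M : 'M[C]_n) *t Z x = 1%:M *t \sum_x Z x.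
  by apply/matrixP => i j; rewrite !mxE !summxE mulr_sumr; apply: eq_bigr => x _; rewrite !mxE.
by rewrite hZ tens11 mul1mx.
Qed.

Lemma Fm_instr s : is_channel E -> is_povm Z -> psd s -> \tr s = 1 ->
  is_instrument (fun x => (Fm x s : {linear 'M[C]_n -> 'M[C]_n})).
Proof.
move=> [hE tE] [hZ sZ] hs ts; split.
  by move=> x; apply: Fm_cp.
by move=> r /=; rewrite sum_Fm // tr_ptrace2 tE tr_tens ts mulr1.
Qed.

Lemma Fm_mix (I : X -> {linear 'M[C]_n -> 'M[C]_n}) (xi s t : 'M[C]_p) (lam : C) :
  is_channel E -> is_povm Z -> is_extremal_instrument I ->
  (forall x r, I x r = Fm x xi r) ->
  psd s -> \tr s = 1 -> psd t -> \tr t = 1 -> 0 < lam < 1 ->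
  xi = lam *: s + (1 - lam) *: t ->
  forall x r, Fm x s r = I x r.
Proof.
move=> hE hZ [_ hext] hI hs ts ht tt hlam hxi.
have [] := hext lam (fun x => (Fm x s : {linear _ -> _})) (fun x => (Fm x t : {linear _ -> _})) hlam
  (Fm_instr hE hZ hs ts) (Fm_instr hE hZ ht tt).
  move=> x r /=; rewrite hI hxi.
  change (Fs x r (lam *: s + (1 - lam) *: t) = lam *: Fs x r s + (1 - lam) *: Fs x r t).
  by rewrite linearP linearZ.
by move=> h _ x r; exact: h.
Qed.

Lemma Fm_dom (I : X -> {linear 'M[C]_n -> 'M[C]_n}) (xi s : 'M[C]_p) (mu : C) :
  is_channel E -> is_povm Z -> is_extremal_instrument I ->
  (forall x r, I x r = Fm x xi r) -> \tr xi = 1 ->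
  psd s -> \tr s = 1 -> 0 < mu -> psd (xi - mu *: s) ->
  forall x r, Fm x s r = I x r.
Proof.
move=> hE hZ hext hI txi hs ts hmu hd.
have h1 : 0 < 1 + mu by rewrite addr_gt0.
have n1 : 1 + mu != 0 by rewrite gt_eqF.
set lam := mu / (1 + mu).
have hl1 : 1 - lam = (1 + mu)^-1 by rewrite /lam; field.
set t := (1 + mu) *: (xi - lam *: s).
apply: (Fm_mix hE hZ hext hI hs ts (t := t) (lam := lam)).
- rewrite /t; apply: psd_scale; first exact: ltW.
  have -> : xi - lam *: s = (xi - mu *: s) + (mu - lam) *: s.
    by rewrite scalerBl addrA subrK.
  apply: psd_add => //; apply: psd_scale => //.
  have -> : mu - lam = mu * mu / (1 + mu) by rewrite /lam; field.
  by apply: divr_ge0; [apply: mulr_ge0; apply: ltW|apply: ltW].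
- rewrite /t mxtraceZ mxtraceD -scaleN1r mxtraceZ mxtraceZ txi ts /lam; field; exact: n1.
- apply/andP; split; first by rewrite /lam divr_gt0.
  by rewrite -subr_gt0 hl1 invr_gt0.
- rewrite /t scalerA hl1 mulVf // scale1r; by rewrite addrC subrK.
Qed.

End Meas.

From HB Require Import structures.
From mathcomp Require Import all_boot all_order all_algebra.
From mathcomp Require Import reals.
From mathcomp.real_closed Require Import complex mxtens.
From mathcomp Require Import ring.
Set Implicit Arguments. Unset Strict Implicit. Unset Printing Implicit Defensive.
Import Order.TTheory GRing.Theory Num.Theory.
Local Open Scope ring_scope.

Section Core.
Variables (C : numClosedFieldType) (n p : nat) (X : finType).
Variable E : {linear 'M[C]_(n * p) -> 'M[C]_(n * p)}.
Variable Z : X -> 'M[C]_p.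
Variable I : X -> {linear 'M[C]_n -> 'M[C]_n}.
Variable xi : 'M[C]_p.
Hypothesis hE : is_channel E.
Hypothesis hZ : is_povm Z.
Hypothesis hext : is_extremal_instrument I.
Hypothesis hI : forall x r, I x r = Fm E Z x xi r.
Hypothesis txi : \tr xi = 1.
Variable Q : 'M[C]_p.
Variable lam : 'I_p -> C.
Hypothesis QQ : adjmx Q *m Q = 1%:M.
Hypothesis QQ' : Q *m adjmx Q = 1%:M.
Hypothesis hlam : forall f, 0 < lam f.
Hypothesis xieq : xi = \sum_f lam f *: (col f Q *m adjmx (col f Q)).

Local Notation q f := (col f Q).
Local Notation P d e := (col d Q *m adjmx (col e Q)).

Lemma FmZ x a s r : Fm E Z x (a *: s) r = a *: Fm E Z x s r.
Proof. by change (Fs E Z x r (a *: s) = a *: Fs E Z x r s); rewrite linearZ. Qed.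
Lemma FmD x s t r : Fm E Z x (s + t) r = Fm E Z x s r + Fm E Z x t r.
Proof. by change (Fs E Z x r (s + t) = Fs E Z x r s + Fs E Z x r t); rewrite linearD. Qed.
Lemma FmS x (T : finType) (s : T -> 'M[C]_p) r :
  Fm E Z x (\sum_i s i) r = \sum_i Fm E Z x (s i) r.
Proof. by change (Fs E Z x r (\sum_i s i) = \sum_i Fs E Z x r (s i)); rewrite linear_sum. Qed.

Lemma trP d e : \tr (P d e) = (d == e)%:R.
Proof.
by rewrite mxtrace_mulC /mxtrace big_ord1 colQ QQ mxE eq_sym.
Qed.

Lemma sum_ind_mx (a : 'I_p) (c : C) (F : 'I_p -> 'M[C]_p) :
  \sum_f ((f == a)%:R * c) *: F f = c *: F a.
Proof.
rewrite (bigD1 a) //= big1 ?addr0 ?eqxx ?mul1r // => g ng.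
by rewrite (negbTE ng) mul0r scale0r.
Qed.

Lemma claimA x r d : Fm E Z x (P d d) r = I x r.
Proof.
apply: (Fm_dom hE hZ hext hI txi (psd_rank1 _) _ (hlam d)).
  by rewrite trP eqxx.
have -> : xi - lam d *: P d d = \sum_f (if f == d then 0 else lam f) *: P f f.
  rewrite xieq (bigD1 d) //= [X in _ = X](bigD1 d) //= eqxx scale0r add0r.
  rewrite addrC addrK; apply: eq_bigr => f /negbTE ->; by [].
apply: psd_sum => [f|f]; last exact: psd_rank1.
by case: ifP => _; [exact: lexx|exact: ltW].
Qed.

Lemma vv_exp d e (c : C) :
  (q d + c *: q e) *m adjmx (q d + c *: q e) =
  P d d + c^* *: P d e + c *: P e d + (c * c^*) *: P e e.
Proof.
rewrite adjmxD adjmxZ mulmxDl !mulmxDr -!scalemxAr -!scalemxAl scalerA.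
by rewrite !addrA [c^* * c]mulrC.
Qed.

Lemma zid (V : zmodType) (A u1 u2 B : V) : A + u1 + u2 + B + (A - u1 - u2 + B) = A + B + (A + B).
Proof.
have h : forall w1 w2 : V, A + w1 + w2 + B = (A + B) + (w1 + w2).
  by move=> w1 w2; rewrite [A + w1 + w2 + B]addrAC [A + w1 + B]addrAC -!addrA.
by rewrite h h -opprD addrACA subrr addr0.
Qed.

Lemma lmod_id (xi' a b vv ww : 'M[C]_p) (mu : C) : vv + ww = 2%:R *: (a + b) ->
  xi' - mu *: ((2%:R)^-1 *: vv) = xi' - mu *: a - mu *: b + (mu / 2%:R) *: ww.
Proof.
have two0 : (2%:R : C) != 0 by rewrite pnatr_eq0.
move=> h; have -> : ww = 2%:R *: (a + b) - vv by rewrite -h addrC addKr.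
rewrite scalerBr scalerA [(mu / 2%:R) *: (2%:R *: _)]scalerA mulfVK // scalerDr.
rewrite addrA -(addrA (xi' - mu *: a)) [mu *: a + _]addrC addKr subrK; by [].
Qed.

Lemma claimB x r d e (c : C) : d != e -> c * c^* = 1 ->
  Fm E Z x ((q d + c *: q e) *m adjmx (q d + c *: q e)) r = 2%:R *: I x r.
Proof.
move=> nde hc.
set v := q d + c *: q e.
have hvv := vv_exp d e c; have hww := vv_exp d e (- c).
rewrite -/v in hvv.
have two0 : (2%:R : C) != 0 by rewrite pnatr_eq0.
set mu := lam d * lam e / (lam d + lam e).
have hde : 0 < lam d + lam e by rewrite addr_gt0.
have mu0 : 0 < mu by rewrite /mu divr_gt0 // mulr_gt0.
suff h : Fm E Z x ((2%:R)^-1 *: (v *m adjmx v)) r = I x r.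
  have e2 : v *m adjmx v = 2%:R *: ((2%:R)^-1 *: (v *m adjmx v)) by rewrite scalerA mulfV // scale1r.
  by rewrite {1}e2 FmZ h.
apply: (Fm_dom hE hZ hext hI txi (s := (2%:R)^-1 *: (v *m adjmx v)) _ _ mu0).
- by apply: psd_scale; [rewrite invr_ge0 ler0n|exact: psd_rank1].
- rewrite mxtraceZ hvv !mxtraceD !mxtraceZ !trP eqxx (negbTE nde) eq_sym (negbTE nde) hc.
  by rewrite eqxx !mulr0 !addr0 mul1r -natrD mulVf.
have -> : xi - mu *: ((2%:R)^-1 *: (v *m adjmx v)) =
  \sum_f (lam f - (f == d)%:R * mu - (f == e)%:R * mu) *: P f f +
  (mu / 2%:R) *: ((q d + (- c) *: q e) *m adjmx (q d + (- c) *: q e)).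
  have hs : \sum_f (lam f - (f == d)%:R * mu - (f == e)%:R * mu) *: P f f = xi - mu *: P d d - mu *: P e e.
    rewrite xieq -(sum_ind_mx d mu (fun f => P f f)) -(sum_ind_mx e mu (fun f => P f f)) -!sumrB.
    by apply: eq_bigr => f _; rewrite !scalerBl.
  rewrite hs; apply: lmod_id.
  rewrite hww hvv rmorphN /= mulrN mulNr opprK hc !scaleNr !scale1r.
  rewrite scaler_nat mulr2n; set A := P d d; set B := P e e.
  set u1 := c^* *: P d e; set u2 := c *: P e d.
  exact: zid.
apply: psd_add; last first.
  by apply: psd_scale; [apply: divr_ge0; [exact: ltW|exact: ler0n]|exact: psd_rank1].
apply: psd_sum => [f|f]; last exact: psd_rank1.
have mud : mu <= lam d.
  rewrite -subr_ge0; have -> : lam d - mu = lam d * lam d / (lam d + lam e).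
    by rewrite /mu; field; rewrite gt_eqF.
  by rewrite divr_ge0 ?mulr_ge0 // ltW.
have mue : mu <= lam e.
  rewrite -subr_ge0; have -> : lam e - mu = lam e * lam e / (lam d + lam e).
    by rewrite /mu; field; rewrite gt_eqF.
  by rewrite divr_ge0 ?mulr_ge0 // ltW.
case: (eqVneq f d) => [->|nfd].
  by rewrite (negbTE nde) /= mul1r mul0r subr0 subr_ge0.
case: (eqVneq f e) => [->|nfe].
  by rewrite /= mul1r mul0r subr0 subr_ge0.
by rewrite /= !mul0r !subr0 ltW.
Qed.

Lemma rearr (V : zmodType) (J x y : V) : J + x + y + J = (J + J) + (x + y).
Proof. by rewrite [J + x + y + J]addrAC [J + x + J]addrAC -!addrA. Qed.

Lemma solve2 (J a b : 'M[C]_n) :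
  J + a + b + J = 2%:R *: J -> J + ('i^*) *: a + 'i *: b + J = 2%:R *: J -> a = 0.
Proof.
rewrite conjCi scaler_nat mulr2n rearr -[X in _ = X]addr0 => /addrI hab.
rewrite rearr -[X in _ = X]addr0 => /addrI.
have -> : b = - a by apply/eqP; rewrite -addr_eq0 addrC hab.
rewrite scalerN scaleNr -opprD => /eqP; rewrite oppr_eq0 -scalerDl scaler_eq0.
by rewrite -mulr2n mulrn_eq0 /= (negbTE (neq0Ci _)) /= => /eqP.
Qed.

Lemma claimC x r d e : d != e -> Fm E Z x (P d e) r = 0.
Proof.
move=> nde.
have hc1 : (1 : C) * 1^* = 1 by rewrite conjC1 mulr1.
have h1 := @claimB x r d e 1 nde hc1.
rewrite vv_exp conjC1 mulr1 !scale1r !FmD !claimA in h1.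
have hci : 'i * ('i : C)^* = 1 by rewrite conjCi mulrN -expr2 sqrCi opprK.
have h2 := @claimB x r d e 'i nde hci.
rewrite vv_exp hci scale1r !FmD !FmZ !claimA in h2.
exact: (solve2 (J := I x r) (b := Fm E Z x (P e d) r) h1 h2).
Qed.

Lemma expandQ (M : 'M[C]_p) :
  Q *m M *m adjmx Q = \sum_d \sum_e M d e *: P d e.
Proof.
apply/matrixP => i j; rewrite !mxE summxE.
under [RHS]eq_bigr do rewrite summxE.
rewrite exchange_big /=; apply: eq_bigr => e _; rewrite !mxE mulr_suml.
apply: eq_bigr => d _; rewrite !mxE big_ord1 !mxE; ring.
Qed.

Lemma claimK x r s : Fm E Z x s r = \tr s *: I x r.
Proof.
set M := adjmx Q *m s *m Q.
have hs : s = \sum_d \sum_e M d e *: P d e.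
  by rewrite -expandQ /M !mulmxA QQ' mul1mx -mulmxA QQ' mulmx1.
have tM : \tr s = \sum_d M d d.
  by rewrite -[\sum_d M d d]/(\tr M) /M -mulmxA mxtrace_mulC -mulmxA QQ' mulmx1.
rewrite {1}hs FmS tM scaler_suml; apply: eq_bigr => d _.
rewrite FmS (bigD1 d) //= big1 ?addr0; first by rewrite FmZ claimA.
by move=> e ned; rewrite FmZ claimC 1?eq_sym // scaler0.
Qed.

End Core.

From HB Require Import structures.
From mathcomp Require Import all_boot all_order all_algebra.
From mathcomp Require Import reals.
From mathcomp.real_closed Require Import complex mxtens.
From mathcomp Require Import ring.
Set Implicit Arguments. Unset Strict Implicit. Unset Printing Implicit Defensive.
Import Order.TTheory GRing.Theory Num.Theory.
Local Open Scope ring_scope.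

Section Fin.
Variable C : numClosedFieldType.

Lemma delta_tens n p (j i : 'I_n) (b a : 'I_p) :
  delta_mx (mxtens_index (j, b)) (mxtens_index (i, a)) = (delta_mx j i : 'M[C]_n) *t (delta_mx b a : 'M[C]_p).
Proof.
apply/matrixP => I J.
case: (mxtens_indexP I) => k c; case: (mxtens_indexP J) => l d.
rewrite tensmxE !mxE !mxtens_index_eq.
by case: (k == j); case: (c == b); case: (l == i); case: (d == a); rewrite /= ?mulr1 ?mulr0 ?mul0r.
Qed.

Lemma tr_tens1 n p (B : 'M[C]_n) (N : 'M[C]_(n * p)) :
  \tr ((B *t (1%:M : 'M[C]_p)) *m N) = \tr (B *m ptrace2 N).
Proof.
rewrite /mxtrace sum_tens; apply: eq_bigr => i _.
rewrite mxE.
transitivity (\sum_a \sum_k B i k * N (mxtens_index (k, a)) (mxtens_index (i, a))); last first.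
  rewrite exchange_big /=; apply: eq_bigr => k _; rewrite mxE mulr_sumr; by [].
apply: eq_bigr => a _; rewrite mxE sum_tens; apply: eq_bigr => k _.
transitivity (\sum_c (a == c)%:R * (B i k * N (mxtens_index (k, c)) (mxtens_index (i, a)))).
  by apply: eq_bigr => c _; rewrite tensmxE mxE; ring.
by rewrite sumk1.
Qed.

Lemma dual_final n p (X : finType) (E : {linear 'M[C]_(n * p) -> 'M[C]_(n * p)})
  (Z : X -> 'M[C]_p) (x : X) (B : 'M[C]_n) (J : {linear 'M[C]_n -> 'M[C]_n}) :
  (forall r s, Fm E Z x s r = \tr s *: J r) ->
  dual E (B *t Z x) = dual J B *t (1%:M : 'M[C]_p).
Proof.
move=> hK; apply/matrixP => I0 J0.
case: (mxtens_indexP I0) => i a; case: (mxtens_indexP J0) => j b.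
rewrite tensmxE [LHS]mxE [dual J B i j]mxE delta_tens.
rewrite tensmx_decr -mulmxA tr_tens1.
have := hK (delta_mx j i) (delta_mx b a); rewrite /Fm => ->.
rewrite -scalemxAr mxtraceZ mulrC; congr (_ * _).
rewrite /mxtrace (bigD1 b) //= big1 ?addr0; first by rewrite !mxE eqxx /= eq_sym.
by move=> c nc; rewrite mxE (negbTE nc) /= ?andbF // eq_sym (negbTE nc).
Qed.

End Fin.

Theorem mainTheorem17 (R : realType) (nS nA : nat) (X : finType)
    (xi : 'M[R[i]]_nA)
    (E : {linear 'M[R[i]]_(nS * nA) -> 'M[R[i]]_(nS * nA)})
    (Z : X -> 'M[R[i]]_nA)
    (I : X -> {linear 'M[R[i]]_nS -> 'M[R[i]]_nS}) :
  (2 <= nS)%N ->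
  is_measurement_scheme xi E Z ->
  scheme_third_law xi E ->
  implements xi E Z I ->
  is_extremal_instrument I ->
  forall (x : X) (B : 'M[R[i]]_nS),
    dual E (B *t Z x) = dual (I x) B *t (1%:M : 'M[R[i]]_nA).
Proof.
move=> _ [[xps xtr] [hEch hpovm]] [[xpd _] _] himp hext x B.
have [Q [lam [QQ QQ' hlam xieq]]] := pd_spectral xpd.
have hI : forall y r, I y r = Fm E Z y xi r by move=> y r; rewrite himp.
apply: dual_final => r s.
by apply: (claimK hEch hpovm hext hI xtr QQ QQ' hlam xieq).
Qed.
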